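(* Let $X\subseteq\mathbb{R}^n$ be nonempty, closed and convex; let $F:X\to\mathbb{R}^n$ be $L_F$-Lipschitz continuous and monotone on $X$; let $H:X\to\mathbb{R}^n$ be $L_H$-Lipschitz continuous and monotone on $X$; and assume $\mathrm{SOL}(\mathrm{SOL}(X,F),H)\neq\emptyset$. Let $\gamma>0$, let $\{\eta_k\}$ be positive scalars, let $x_0\in X$, and for $k\ge0$ define $y_{k+1}=\Pi_X[x_k-\gamma(F(x_k)+\eta_kH(x_k))]$, $x_{k+1}=\Pi_X[x_k-\gamma(F(y_{k+1})+\eta_kH(y_{k+1}))]$. Then for any $x\in X$: (i) For all $k\ge0$, $\|x_{k+1}-x\|^2\le\|x_k-x\|^2-\|y_{k+1}-x_k\|^2+2\gamma^2(L_F^2+\eta_k^2L_H^2)\|y_{k+1}-x_k\|^2+2\gamma(F(y_{k+1})+\eta_kH(y_{k+1}))^\top(x-y_{k+1})$. (ii) If $\gamma^2(L_F^2+\eta_k^2L_H^2)\le0.5$ for all $k\ge0$, then for all $k\ge0$, $2\gamma(F(x)+\eta_kH(x))^\top(y_{k+1}-x)\le\|x_k-x\|^2-\|x_{k+1}-x\|^2$. (iii) If $\gamma^2(L_F^2+\eta_k^2L_H^2)\le0.5$ for all $k\ge0$ and moreover $H=\nabla f$ where $f$ is convex and $L$-smooth, then for all $k\ge0$, $2\gamma F(x)^\top(y_{k+1}-x)+2\gamma\eta_k(f(y_{k+1})-f(x))\le\|x_k-x\|^2-\|x_{k+1}-x\|^2$.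
   Context: $\mathrm{SOL}(Y,G)=\{x\in Y: G(x)^\top(y-x)\ge0\ \forall y\in Y\}$; $\Pi_X$ is the Euclidean projection onto $X$. $L$-smooth means continuously differentiable with $L$-Lipschitz gradient (in (iii), $L_H=L$). *)

(* Defs.v *)
From HB Require Import structures.
From mathcomp Require Import all_boot all_order all_algebra.
From mathcomp Require Import all_classical all_reals all_analysis.
Set Implicit Arguments. Unset Strict Implicit. Unset Printing Implicit Defensive.
Import Order.TTheory GRing.Theory Num.Theory.
Import numFieldNormedType.Exports.
Local Open Scope classical_set_scope.
Local Open Scope ring_scope.

Section Defs.
Variables (R : realType) (n : nat).
Notation V := 'rV[R]_n.

Definition dotp (u v : V) : R := \sum_(i < n) u ord0 i * v ord0 i.
Definition enorm (u : V) : R := Num.sqrt (dotp u u).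

Definition Convex_set (X : set V) : Prop :=
  forall x y t, X x -> X y -> 0 <= t <= 1 -> X (t *: x + (1 - t) *: y).

Definition Lipschitz_on (Y : set V) (G : V -> V) (L : R) : Prop :=
  forall x y, Y x -> Y y -> enorm (G x - G y) <= L * enorm (x - y).

Definition Monotone_on (Y : set V) (G : V -> V) : Prop :=
  forall x y, Y x -> Y y -> 0 <= dotp (G x - G y) (x - y).

Definition SOL (Y : set V) (G : V -> V) : set V :=
  [set x | Y x /\ forall y, Y y -> 0 <= dotp (G x) (y - x)].

Definition is_projection (X : set V) (P : V -> V) : Prop :=
  forall z, X (P z) /\ forall y, X y -> enorm (z - P z) <= enorm (z - y).

Definition is_gradient (f : V -> R) (g : V -> V) : Prop :=
  forall x, differentiable f x /\ forall v, 'd f x v = dotp (g x) v.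

Definition Convex_fun (f : V -> R) : Prop :=
  forall x y t, 0 <= t <= 1 ->
    f (t *: x + (1 - t) *: y) <= t * f x + (1 - t) * f y.

End Defs.

(* Main.v *)
Require Import Defs.
From HB Require Import structures.
From mathcomp Require Import all_boot all_order all_algebra.
From mathcomp Require Import all_classical all_reals all_analysis.
From mathcomp Require Import ring lra.
Import Order.TTheory GRing.Theory Num.Theory.
Import numFieldNormedType.Exports.
Local Open Scope classical_set_scope.
Local Open Scope ring_scope.

Section Aux.
Context {R : realType} {n : nat}.
Notation V := 'rV[R]_n.
Implicit Types u v w : V.

Lemma dotpC u v : dotp u v = dotp v u.
Proof. by apply: eq_bigr => i _; rewrite mulrC. Qed.
Lemma dotpDl u v w : dotp (u + v) w = dotp u w + dotp v w.
Proof. by rewrite /dotp -big_split; apply: eq_bigr => i _; rewrite !mxE mulrDl. Qed.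
Lemma dotpDr u v w : dotp w (u + v) = dotp w u + dotp w v.
Proof. by rewrite dotpC dotpDl !(dotpC w). Qed.
Lemma dotpZl a u v : dotp (a *: u) v = a * dotp u v.
Proof. by rewrite /dotp mulr_sumr; apply: eq_bigr => i _; rewrite !mxE mulrA. Qed.
Lemma dotpZr a u v : dotp v (a *: u) = a * dotp v u.
Proof. by rewrite dotpC dotpZl dotpC. Qed.
Lemma dotpNl u v : dotp (- u) v = - dotp u v.
Proof. by rewrite -scaleN1r dotpZl mulN1r. Qed.
Lemma dotpNr u v : dotp v (- u) = - dotp v u.
Proof. by rewrite -scaleN1r dotpZr mulN1r. Qed.
Lemma dotpBl u v w : dotp (u - v) w = dotp u w - dotp v w.
Proof. by rewrite dotpDl dotpNl. Qed.
Lemma dotpBr u v w : dotp w (u - v) = dotp w u - dotp w v.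
Proof. by rewrite dotpDr dotpNr. Qed.
Lemma dotp_ge0 u : 0 <= dotp u u.
Proof. by apply: sumr_ge0 => i _; rewrite -expr2 sqr_ge0. Qed.
Lemma enorm2 u : enorm u ^+ 2 = dotp u u.
Proof. by rewrite /enorm sqr_sqrtr // dotp_ge0. Qed.
Lemma enorm_ge0 u : 0 <= enorm u.
Proof. exact: sqrtr_ge0. Qed.


Lemma enorm_le_sq {u v} : enorm u <= enorm v -> dotp u u <= dotp v v.
Proof. by rewrite /enorm ler_sqrt // dotp_ge0. Qed.

Lemma proj_vi (X : set V) P z y : Convex_set X -> is_projection X P -> X y ->
  dotp (z - P z) (y - P z) <= 0.
Proof.
move=> cX hP Xy.
set p := P z; set w := z - p; set d := y - p.
have key : forall t, 0 <= t <= 1 -> 2 * t * dotp w d <= t ^+ 2 * dotp d d.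
  move=> t t01.
  have Xt := cX y p t Xy (proj1 (hP z)) t01.
  have := enorm_le_sq ((proj2 (hP z)) _ Xt).
  have -> : z - (t *: y + (1 - t) *: p) = w - t *: d.
    by apply/rowP => i; rewrite /w /d !mxE; ring.
  rewrite -/p -/w; clearbody w d.
  rewrite !dotpBl !dotpBr !dotpZl !dotpZr (dotpC d w).
  move=> h; nra.
clearbody w d.
rewrite leNgt; apply/negP => a0.
have b1 : 2 * dotp w d <= dotp d d.
  by have := key 1; rewrite mulr1 expr1n mul1r; apply; rewrite ler01 lexx.
case: (lerP (dotp w d) (dotp d d)) => hab.
  have bp : 0 < dotp d d by lra.
  set t := dotp w d / dotp d d.
  have tb : t * dotp d d = dotp w d by rewrite /t mulrAC -mulrA mulfV ?gt_eqF // mulr1.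
  have t0 : 0 < t by rewrite /t divr_gt0.
  have t1 : t <= 1 by rewrite /t ler_pdivrMr // mul1r.
  have := key t; rewrite (ltW t0) t1 => /(_ isT) h.
  have : t * dotp w d <= 0.
    by move: h; rewrite expr2 -(mulrA t t) tb; lra.
  nra.
lra.
Qed.

Lemma grad_ineq (f : V -> R) g x y : Convex_fun f -> is_gradient f g ->
  dotp (g y) (x - y) <= f x - f y.
Proof.
move=> cf hg.
have [dfy dv] := hg y.
rewrite -dv -deriveE //.
set v := x - y.
have hc := @diff_derivable _ _ _ _ _ v dfy.
rewrite leNgt; apply/negP => lt.
have := cvgr_gt _ hc _ lt.
have FF : Filter (0:R)^' by have := Proper_dnbhs_numFieldType (0:R); case.
move=> /(_ FF) [e /= e0 He].
set h := Num.min (e / 2) 1.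
have h0 : 0 < h by rewrite lt_min divr_gt0 ?ltr01.
have h1 : h <= 1 by rewrite ge_min lexx orbT.
have : ball (0:R) e h.
  rewrite /ball /= sub0r normrN gtr0_norm //.
  have : h <= e / 2 by rewrite ge_min lexx.
  lra.
move=> /He /(_ (lt0r_neq0 h0)) /=.
have := cf x y h; rewrite (ltW h0) h1 => /(_ isT).
have -> : h *: x + (1 - h) *: y = h *: v + y.
  by apply/rowP => i; rewrite /v !mxE; ring.
move=> hle.
rewrite -(ltr_pM2l h0) mulrA mulfV ?gt_eqF // mul1r.
lra.
Qed.


Lemma key_ineq (a b c d p q : V) (gam : R) :
  dotp (a - gam *: q - c) (d - c) <= 0 ->
  dotp (a - gam *: p - d) (b - d) <= 0 ->
  dotp (d - b) (d - b) <= dotp (a - b) (a - b) - dotp (c - a) (c - a)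
     + gam ^+ 2 * dotp (p - q) (p - q) + 2 * gam * dotp p (b - c).
Proof.
move=> h1 h2.
have nn := dotp_ge0 (gam *: (p - q) - (c - d)).
move: h1 h2 nn.
rewrite ?(dotpDl, dotpDr, dotpNl, dotpNr, dotpZl, dotpZr).
have s1 := dotpC b a; have s2 := dotpC c a; have s3 := dotpC d a; have s4 := dotpC p a; have s5 := dotpC q a.
have s6 := dotpC c b; have s7 := dotpC d b; have s8 := dotpC p b; have s9 := dotpC q b.
have s10 := dotpC d c; have s11 := dotpC p c; have s12 := dotpC q c.
have s13 := dotpC p d; have s14 := dotpC q d; have s15 := dotpC q p.
move=> h1 h2 nn.
rewrite expr2.
rewrite ?s1 ?s2 ?s3 ?s4 ?s5 ?s6 ?s7 ?s8 ?s9 ?s10 ?s11 ?s12 ?s13 ?s14 ?s15 in h1 h2 nn *.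
lra.
Qed.

Lemma sq_sum_le (u v : V) : dotp (u + v) (u + v) <= 2 * dotp u u + 2 * dotp v v.
Proof.
have := dotp_ge0 (u - v).
rewrite ?(dotpDl, dotpDr, dotpNl, dotpNr) (dotpC v u); lra.
Qed.

Lemma lip_sq (G : V -> V) (Y : set V) L u v : Lipschitz_on Y G L -> Y u -> Y v ->
  dotp (G u - G v) (G u - G v) <= L ^+ 2 * dotp (u - v) (u - v).
Proof.
move=> hL Yu Yv; have := hL u v Yu Yv.
rewrite -!enorm2.
have := enorm_ge0 (G u - G v); have := enorm_ge0 (u - v).
move=> h1 h2 h3. rewrite -exprMn. 
rewrite lerXn2r // ?nnegrE //; lra.
Qed.

End Aux.

Theorem lemma3p3 (R : realType) (n : nat) (X : set 'rV[R]_n)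
  (F H : 'rV[R]_n -> 'rV[R]_n) (LF LH : R) (P : 'rV[R]_n -> 'rV[R]_n)
  (gamma : R) (eta : nat -> R) (x0 : 'rV[R]_n) (xs ys : nat -> 'rV[R]_n) :
  X !=set0 -> closed X -> Convex_set X ->
  Lipschitz_on X F LF -> Monotone_on X F ->
  Lipschitz_on X H LH -> Monotone_on X H ->
  SOL (SOL X F) H !=set0 ->
  is_projection X P ->
  0 < gamma -> (forall k, 0 < eta k) -> X x0 ->
  xs 0%N = x0 ->
  (forall k, ys k.+1 = P (xs k - gamma *: (F (xs k) + eta k *: H (xs k)))) ->
  (forall k, xs k.+1 = P (xs k - gamma *: (F (ys k.+1) + eta k *: H (ys k.+1)))) ->
  forall x, X x ->
    (* (i) *)
    (forall k,
       enorm (xs k.+1 - x) ^+ 2 <=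
         enorm (xs k - x) ^+ 2 - enorm (ys k.+1 - xs k) ^+ 2
         + 2 * gamma ^+ 2 * (LF ^+ 2 + eta k ^+ 2 * LH ^+ 2)
             * enorm (ys k.+1 - xs k) ^+ 2
         + 2 * gamma * dotp (F (ys k.+1) + eta k *: H (ys k.+1)) (x - ys k.+1))
    /\
    (* (ii) *)
    ((forall k, gamma ^+ 2 * (LF ^+ 2 + eta k ^+ 2 * LH ^+ 2) <= 1 / 2) ->
     forall k,
       2 * gamma * dotp (F x + eta k *: H x) (ys k.+1 - x)
         <= enorm (xs k - x) ^+ 2 - enorm (xs k.+1 - x) ^+ 2)
    /\
    (* (iii) *)
    ((forall k, gamma ^+ 2 * (LF ^+ 2 + eta k ^+ 2 * LH ^+ 2) <= 1 / 2) ->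
     forall (f : 'rV[R]_n -> R) (g : 'rV[R]_n -> 'rV[R]_n),
       Convex_fun f -> is_gradient f g -> Lipschitz_on setT g LH ->
       (forall y, X y -> H y = g y) ->
     forall k,
       2 * gamma * dotp (F x) (ys k.+1 - x)
         + 2 * gamma * eta k * (f (ys k.+1) - f x)
         <= enorm (xs k - x) ^+ 2 - enorm (xs k.+1 - x) ^+ 2).
Proof.
move=> _ _ cX lF mF lH mH _ hP g0 eta0 Xx0 hx0 hy hx x Xx.
have Xxs : forall k, X (xs k).
  by case=> [|k]; [rewrite hx0 | rewrite hx; exact: (proj1 (hP _))].
have Xys : forall k, X (ys k.+1) by move=> k; rewrite hy; exact: (proj1 (hP _)).
have stepi : forall k,
   dotp (xs k.+1 - x) (xs k.+1 - x) <=
         dotp (xs k - x) (xs k - x) - dotp (ys k.+1 - xs k) (ys k.+1 - xs k)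
         + 2 * gamma ^+ 2 * (LF ^+ 2 + eta k ^+ 2 * LH ^+ 2)
             * dotp (ys k.+1 - xs k) (ys k.+1 - xs k)
         + 2 * gamma * dotp (F (ys k.+1) + eta k *: H (ys k.+1)) (x - ys k.+1).
  move=> k.
  set a := xs k; set c := ys k.+1; set d := xs k.+1.
  set p := F c + eta k *: H c; set q := F a + eta k *: H a.
  have h1 : dotp (a - gamma *: q - c) (d - c) <= 0.
    rewrite /c hy -/q -/a. exact: (@proj_vi R n X P (a - gamma *: q) d cX hP (Xxs k.+1)).
  have h2 : dotp (a - gamma *: p - d) (x - d) <= 0.
    rewrite /d hx -/p -/a -/c; exact: (@proj_vi R n X P (a - gamma *: p) x cX hP Xx).
  have K := key_ineq _ _ _ _ _ _ _ h1 h2.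
  have lip : dotp (p - q) (p - q) <= 2 * (LF ^+ 2 + eta k ^+ 2 * LH ^+ 2) * dotp (c - a) (c - a).
    have -> : p - q = (F c - F a) + eta k *: (H c - H a).
      by apply/rowP => i; rewrite /p /q !mxE; ring.
    apply: le_trans (sq_sum_le _ _) _.
    rewrite dotpZl dotpZr.
    have := lip_sq _ _ _ _ _ lF (Xys k) (Xxs k); have := lip_sq _ _ _ _ _ lH (Xys k) (Xxs k).
    rewrite -/a -/c => hH hF.
    have := ler_wpM2l (sqr_ge0 (eta k)) hH.
    lra.
  have := ler_wpM2l (sqr_ge0 gamma) lip.
  move: K.
  move=> K L. lra.
split; first by move=> k; rewrite !enorm2; exact: stepi.
have stepii : (forall k, gamma ^+ 2 * (LF ^+ 2 + eta k ^+ 2 * LH ^+ 2) <= 1 / 2) ->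
  forall k, dotp (xs k.+1 - x) (xs k.+1 - x) <= dotp (xs k - x) (xs k - x)
     + 2 * gamma * dotp (F (ys k.+1) + eta k *: H (ys k.+1)) (x - ys k.+1).
  move=> hc k; have := stepi k.
  have D0 := dotp_ge0 (ys k.+1 - xs k).
  have := ler_wpM2r D0 (hc k).
  lra.
split.
  move=> hc k; rewrite !enorm2.
  have S : dotp (F (ys k.+1) + eta k *: H (ys k.+1)) (x - ys k.+1)
        <= - dotp (F x + eta k *: H x) (ys k.+1 - x).
    have m1 := mF _ _ (Xys k) Xx.
    have m2 := ler_wpM2l (ltW (eta0 k)) (mH _ _ (Xys k) Xx).
    move: m1 m2; rewrite mulr0.
    rewrite ?(dotpDl, dotpDr, dotpBl, dotpBr, dotpZl, dotpZr, dotpNl, dotpNr).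
    move=> m1 m2; lra.
  have := ler_wpM2l (ltW g0) S.
  have := stepii hc k.
  lra.
move=> hc f g cf hg _ hHg k; rewrite !enorm2.
have S : dotp (F (ys k.+1) + eta k *: H (ys k.+1)) (x - ys k.+1)
      <= - dotp (F x) (ys k.+1 - x) + eta k * (f x - f (ys k.+1)).
  have m1 := mF _ _ (Xys k) Xx.
  have m2 := ler_wpM2l (ltW (eta0 k)) (grad_ineq _ _ x (ys k.+1) cf hg).
  move: m1 m2; rewrite -(hHg _ (Xys k)).
  rewrite ?(dotpDl, dotpDr, dotpBl, dotpBr, dotpZl, dotpZr, dotpNl, dotpNr).
  move=> m1 m2; lra.
have := ler_wpM2l (ltW g0) S.
have := stepii hc k.
lra.
Qed.
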